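(* Let $U \in \mathbb{U}_N$ satisfy $|\mathrm{tr}(UU^T)| \ge N(1-\delta)$ for some $\delta\ge 0$. Then $D(U,\mathbb{O}_N) \le \sqrt{\delta}$.
   Context: $\mathbb{U}_N$ is the group of complex $N\times N$ unitary matrices, $U^T$ is the transpose, and $\mathbb{O}_N=\{U\in\mathbb{U}_N: UU^T=U^TU=I\}$ is the orthogonal group (real orthogonal matrices). $\|A\|=\sqrt{\mathrm{tr}(A^\dagger A)}$ is the Frobenius norm. For matrices $A,B$, $D(A,B)=\min_{\theta\in[0,2\pi)}\frac{1}{\sqrt{2N}}\|e^{i\theta}A-B\|$, and for a set $\mathcal{S}$, $D(A,\mathcal{S})=\inf_{B\in\mathcal{S}}D(A,B)$. *)

(* Defs.v *)
(* Complex numbers are modelled by an arbitrary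
   numClosedFieldType C (e.g. algC); conjugation is Num.conj (z^* ). *)
From HB Require Import structures.
From mathcomp Require Import all_boot all_order all_algebra.
Set Implicit Arguments. Unset Strict Implicit. Unset Printing Implicit Defensive.
Import Order.TTheory GRing.Theory Num.Theory.
Local Open Scope ring_scope.

Definition adjmx (C : numClosedFieldType) (N : nat) (A : 'M[C]_N) : 'M[C]_N :=
  (map_mx Num.conj A)^T.

Definition unitary (C : numClosedFieldType) (N : nat) (U : 'M[C]_N) : Prop :=
  U *m adjmx U = 1%:M /\ adjmx U *m U = 1%:M.

Definition orthogonal (C : numClosedFieldType) (N : nat) (U : 'M[C]_N) : Prop :=
  unitary U /\ U *m U^T = 1%:M /\ U^T *m U = 1%:M.

Definition frob (C : numClosedFieldType) (N : nat) (A : 'M[C]_N) : C :=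
  sqrtC (\tr (adjmx A *m A)).

Definition dphase (C : numClosedFieldType) (N : nat) (z : C) (A B : 'M[C]_N) : C :=
  frob (z *: A - B) / sqrtC (2 * N%:R).

(* D(A, O_N) <= r, where D(A,O_N) = inf_{B in O_N} min_{theta} dphase (e^{i theta}) A B:
   the infimum (over B and theta) is <= r iff every r + eps is exceeded by some value. *)
Definition dist_orth_le (C : numClosedFieldType) (N : nat) (A : 'M[C]_N) (r : C) : Prop :=
  forall eps : C, 0 < eps ->
    exists z : C, `|z| = 1 /\
      exists B : 'M[C]_N, orthogonal B /\ dphase z A B <= r + eps.

(* Main.v *)
Set Warnings "-notation-overridden -ambiguous-paths".
From HB Require Import structures.
From mathcomp Require Import all_boot all_order all_algebra.
From mathcomp Require Import ring spectral sesquilinear.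
Require Import Defs.
Import Order.TTheory GRing.Theory Num.Theory Num.Def.
Set Implicit Arguments. Unset Strict Implicit.
Local Open Scope ring_scope.

Section Scal.
Variable C : numClosedFieldType.
Implicit Types x u : C.

Lemma n1_of x : x * x^* = 1 -> `|x| = 1.
Proof. by move=> h; rewrite normC_def h sqrtC1. Qed.

Lemma of_n1 x : `|x| = 1 -> x * x^* = 1.
Proof. by move=> h; rewrite -normCK h expr1n. Qed.

Lemma key_ineq x : x * x^* = 1 -> 0 <= x + x^* ->
  (x - 1)^* * (x - 1) <= 1 - (x ^+ 2 + x^* ^+ 2) / 2.
Proof.
move=> h1 h0; set a := x + x^*.
have a2 : a <= 2.
  by have := ler_normD x x^*; rewrite norm_conjC n1_of // ger0_norm.
rewrite -subr_ge0.
have -> : 1 - (x ^+ 2 + x^* ^+ 2) / 2 - (x - 1)^* * (x - 1) = a * (2 - a) / 2.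
  by rewrite rmorphB rmorph1 /a; field.
by apply: divr_ge0 => //; apply: mulr_ge0 => //; rewrite subr_ge0.
Qed.

Definition gsq u := let r := sqrtC u in if 0 <= r + r^* then r else - r.

Lemma gsq_sq u : gsq u ^+ 2 = u.
Proof. by rewrite /gsq; case: ifP; rewrite ?sqrrN sqrtCK. Qed.

Lemma gsq_re u : 0 <= gsq u + (gsq u)^*.
Proof.
rewrite /gsq; set r := sqrtC u; case: ifP => // h.
have hr : r + r^* \is Num.real by apply/CrealP; rewrite raddfD /= conjCK addrC.
rewrite rmorphN -opprD oppr_ge0; apply/ltW.
by rewrite real_ltNge ?h ?real0.
Qed.

Lemma gsq_unit u : u * u^* = 1 -> gsq u * (gsq u)^* = 1.
Proof.
move=> h; apply: of_n1.
have: `|gsq u| ^+ 2 = 1 by rewrite -normrX gsq_sq n1_of.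
move/eqP; rewrite sqrf_eq1 => /orP[/eqP //|/eqP h'].
by have := normr_ge0 (gsq u); rewrite h' ler0N1.
Qed.
Lemma final_bound (t dl e : C) (N : nat) : 0 <= t -> t <= N%:R * dl -> 0 <= dl ->
  0 < e -> sqrtC t / sqrtC (2 * N%:R) <= sqrtC dl + e.
Proof.
move=> t0 tN d0 e0; apply: (@le_trans _ _ (sqrtC dl)); last by rewrite lerDl ltW.
case: N tN => [|N] tN.
  by rewrite mulr0 sqrtC0 invr0 mulr0 sqrtC_ge0.
have hp : 0 < 2 * N.+1%:R :> C by rewrite mulr_gt0 // ltr0n.
rewrite ler_pdivrMr ?sqrtC_gt0 // -sqrtCM; last 2 first.
- by rewrite qualifE /=.
- by rewrite qualifE /= ltW.
rewrite ler_sqrtC; last 2 first.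
- by rewrite qualifE /=.
- by rewrite qualifE /= mulr_ge0 // ltW.
apply: (le_trans tN); by rewrite mulrC ler_wpM2l // ler_pMl ?ltr0n // ler1n.
Qed.

End Scal.

Local Open Scope sesquilinear_scope.

Section Mx.
Variable C : numClosedFieldType.
Variable n : nat.
Implicit Types A B G Q R : 'M[C]_n.

Lemma adjE A : adjmx A = A ^t*.
Proof. by rewrite /adjmx map_trmx. Qed.

Lemma tCt (d : 'rV[C]_n) : (diag_mx d) ^t* = diag_mx (map_mx conjC d).
Proof. by rewrite tr_diag_mx map_diag_mx. Qed.

Lemma frob_inv R G Q : R ^t* *m R = 1%:M -> Q *m Q ^t* = 1%:M ->
  \tr ((R *m G *m Q) ^t* *m (R *m G *m Q)) = \tr (G ^t* *m G).
Proof.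
move=> hR hQ.
rewrite !trmx_mul !map_mxM !mulmxA -[_ *m R ^t* *m R]mulmxA hR mulmx1.
by rewrite mxtrace_mulC !mulmxA hQ mul1mx.
Qed.
End Mx.

Theorem lemma2 (C : numClosedFieldType) (N : nat) (U : 'M[C]_N) (delta : C) :
  unitary U -> 0 <= delta ->
  N%:R * (1 - delta) <= `|\tr (U *m U^T)| ->
  dist_orth_le U (sqrtC delta).
Proof.
move=> [UU1 _] d0 hT eps eps0.
have Uu : U \is unitarymx by apply/unitarymxP; rewrite -adjE.
set W := U *m U^T.
have Wu : W \is unitarymx by apply: mul_unitarymx; rewrite ?trmx_unitary.
have WW1 := unitarymxP Wu.
have Wn : W \is normalmx by apply/normalmxP; rewrite WW1 (mulmx1C WW1).
have WT : W^T = W by rewrite /W trmx_mul trmxK.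
set P := spectralmx W; set d := spectral_diag W.
have Pu : P \is unitarymx by apply: spectral_unitarymx.
have PPa : P *m P ^t* = 1%:M by apply/unitarymxP.
have PaP : P ^t* *m P = 1%:M by apply: mulmx1C.
have WE : W = P ^t* *m diag_mx d *m P.
  by rewrite -invmx_unitary //; apply/orthomx_spectralP.
have DE : diag_mx d = P *m W *m P ^t*.
  by rewrite WE !mulmxA PPa mul1mx -mulmxA PPa mulmx1.
have dU : forall i, d 0 i * (d 0 i)^* = 1.
  have Du : diag_mx d \is unitarymx.
    by rewrite DE; apply: mul_unitarymx; [apply: mul_unitarymx|]; rewrite ?trmxC_unitary.
  move=> i; have := unitarymxP Du; rewrite tCt mulmx_diag => /matrixP/(_ i i).
  by rewrite !mxE eqxx !mulr1n.
have PcPt : map_mx conjC P *m P^T = 1%:M.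
  by rewrite -[P^T]map_mxCK -map_mxM PPa map_mx1.
have PtPc : P^T *m map_mx conjC P = 1%:M by apply: mulmx1C.
set M := P *m P^T.
have MD : M *m diag_mx d = diag_mx d *m M.
  have e1 : (P ^t* *m diag_mx d *m P)^T = P^T *m diag_mx d *m map_mx conjC P.
    by rewrite !trmx_mul tr_diag_mx map_trmx trmxK mulmxA.
  rewrite -WE WT WE in e1.
  have := congr1 (fun X => P *m X *m P^T) e1.
  rewrite !mulmxA PPa mul1mx -!mulmxA PcPt mulmx1 => ->.
  by rewrite !mulmxA.
have Mij : forall i j, d 0 i * M i j = M i j * d 0 j.
  move=> i j; have /matrixP/(_ i j) := MD.
  by rewrite mul_mx_diag mul_diag_mx !mxE => ->.
set T := \tr W.
pose w := if T == 0 then 1 else T / `|T|.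
have ww : w * w^* = 1.
  rewrite /w; case: eqP => [_|/eqP T0]; first by rewrite rmorph1 mulr1.
  rewrite rmorphM rmorphV ?unitfE ?normr_eq0 //= conj_normC.
  rewrite mulrACA -normCK -invfM -expr2 mulfV // expf_neq0 // normr_eq0 //.
have wT : w^* * T = `|T|.
  rewrite /w; case: eqP => [->|/eqP T0]; first by rewrite normr0 mulr0.
  rewrite rmorphM rmorphV ?unitfE ?normr_eq0 //= conj_normC.
  by rewrite mulrAC -normCKC expr2 mulfK // normr_eq0.
pose c := sqrtC w.
have cc : c^* * c = 1.
  by rewrite -normCKC -normrX sqrtCK n1_of.
pose f := fun x : C => c * gsq (w^* * x).
have fsq : forall x, f x ^+ 2 = x.
  move=> x; rewrite /f exprMn gsq_sq sqrtCK mulrA ww mul1r //.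
have fu : forall x, x * x^* = 1 -> f x * (f x)^* = 1.
  move=> x hx; rewrite /f rmorphM /= mulrACA [c * _]mulrC cc mul1r gsq_unit //.
  by rewrite rmorphM /= conjCK mulrACA [w^* * _]mulrC ww mul1r.
pose F := diag_mx (\row_i f (d 0 i)).
have FM0 : forall M0 : 'M_N, (forall i j, d 0 i * M0 i j = M0 i j * d 0 j) ->
    F *m M0 = M0 *m F.
  move=> M0 Mij0; apply/matrixP => i j; rewrite mul_diag_mx mul_mx_diag !mxE.
  have [->|Mn0] := eqVneq (M0 i j) 0; first by rewrite mulr0 mul0r.
  have -> : d 0 i = d 0 j by apply: (mulIf Mn0); rewrite Mij0 mulrC.
  by rewrite mulrC.
have FM : F *m M = M *m F by apply: FM0.
pose S := P ^t* *m F *m P.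
have ST : S^T = S.
  have -> : S^T = P^T *m F *m map_mx conjC P.
    by rewrite /S !trmx_mul tr_diag_mx map_trmx trmxK mulmxA.
  have e : S = P ^t* *m (F *m M) *m map_mx conjC P.
    by rewrite /S /M -!mulmxA PtPc mulmx1.
  by rewrite e FM /M !mulmxA PaP mul1mx.
have FF : F *m F = diag_mx d.
  rewrite mulmx_diag; apply/matrixP=> i j; rewrite !mxE -expr2 fsq //.
have SS : S *m S = W.
  rewrite /S -!mulmxA [P *m (P ^t* *m _)]mulmxA PPa mul1mx.
  by rewrite [F *m (F *m P)]mulmxA FF WE mulmxA.
have StE : S ^t* = P ^t* *m F ^t* *m P.
  by rewrite /S !trmx_mul !map_mxM trmxCK mulmxA.
have FFt : F *m F ^t* = 1%:M.
  rewrite tCt mulmx_diag; apply/matrixP=> i j; rewrite !mxE fu //.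
have SSt : S *m S ^t* = 1%:M.
  rewrite StE /S -!mulmxA [P *m (P ^t* *m _)]mulmxA PPa mul1mx.
  by rewrite [F *m (F ^t* *m P)]mulmxA FFt mul1mx PaP.
have StS : S ^t* *m S = 1%:M by apply: mulmx1C.
have Su : S ^t* \is unitarymx by rewrite trmxC_unitary; apply/unitarymxP.
pose V := S ^t* *m U.
have Vu : V \is unitarymx by apply: mul_unitarymx.
have VVT : V *m V^T = 1%:M.
  have StT : (S ^t*)^T = S ^t* by rewrite map_trmx trmxK ST.
  rewrite /V [(_ *m U)^T]trmx_mul StT mulmxA -[S ^t* *m U *m U^T]mulmxA -/W -SS.
  by rewrite [S ^t* *m (S *m S)]mulmxA StS mul1mx SSt.
have VVt : V *m V ^t* = 1%:M by apply/unitarymxP.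
have VtV : V ^t* *m V = 1%:M by apply: mulmx1C.
have Vo : orthogonal V.
  by split; [split; rewrite adjE | split => //; apply: mulmx1C].
have ccr : c * c^* = 1 by rewrite mulrC.
exists c^*; split; first by rewrite norm_conjC n1_of.
exists V; split => //.
have US : U = S *m V by rewrite /V mulmxA SSt mul1mx.
pose G := c^* *: F - 1%:M.
have XE : c^* *: U - V = P ^t* *m G *m (P *m V).
  rewrite mulmxBr mulmx1 mulmxBl [P ^t* *m (P *m V)]mulmxA PaP mul1mx.
  by rewrite -scalemxAr -scalemxAl mulmxA {1}US.
rewrite /dphase /frob XE adjE frob_inv; last 2 first.
- by rewrite trmxCK.
- by apply/unitarymxP; apply: mul_unitarymx.
have GE : G = diag_mx (\row_i (gsq (w^* * d 0 i) - 1)).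
  apply/matrixP => i j; rewrite !mxE; case: (i == j);
    rewrite ?mulr1n ?mulr0n ?mulr0 ?subr0 //.
  by rewrite /f mulrA cc mul1r.
rewrite GE tCt mulmx_diag mxtrace_diag.
apply: final_bound => //.
- by apply: sumr_ge0 => i _; rewrite !mxE mulrC mul_conjC_ge0.
have trd : T = \sum_i d 0 i.
  by rewrite /T WE mxtrace_mulC mulmxA PPa mul1mx mxtrace_diag.
have uu : forall i, (w^* * d 0 i) * (w^* * d 0 i)^* = 1.
  by move=> i; rewrite rmorphM /= conjCK mulrACA [w^* * _]mulrC ww mul1r dU.
apply: (@le_trans _ _ (\sum_i (1 - (w^* * d 0 i + (w^* * d 0 i)^*) / 2))).
  apply: ler_sum => i _; rewrite !mxE.
  have := key_ineq (gsq_unit (uu i)) (gsq_re (w^* * d 0 i)).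
  by rewrite -rmorphXn /= gsq_sq.
rewrite sumrB sumr_const card_ord -mulr_suml big_split /= -mulr_sumr -rmorph_sum /=.
rewrite -trd wT -mulr_sumr -trd wT conj_normC.
have h2 : forall x : C, (x + x) / 2 = x.
  by move=> x; rewrite -mulr2n -[x *+ 2]mulr_natr mulfK // pnatr_eq0.
rewrite h2.
by move: hT; rewrite mulrBr mulr1 lerBlDl lerBlDr.
Qed.
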